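(* Let $\vec q=\{q_j\}_{j\ge1}$ be a sequence of natural numbers and $q\in\mathbb{N}$, and let $S(\vec q)$ and $S(q)$ be the corresponding modified Sierpinski sets. Assume that for every $p\in\mathbb{N}$ there is $\bar j$ such that $q_j=q$ for all $\bar j\le j\le \bar j+p$. Let $v$ be a vertex of the initial equilateral triangle. Then the tangent cone of $S(\vec q)$ at $v$ contains the tangent sets of $S(q)$ at $v$.
   Context: Fix a closed equilateral triangle $\Delta_0\subset\mathbb{R}^2$. Given $\vec q=\{q_j\}$, construct compact sets $K_0=\Delta_0\supseteq K_1\supseteq\cdots$: at step $j$, each triangle of $K_{j-1}$ (all equilateral, upward pointing) has its sides divided into $q_j$ equal parts, producing $q_j^2$ equal equilateral subtriangles, and all downward-pointing subtriangles are removed, leaving $q_j(q_j+1)/2$ triangles; $K_j$ is the union of the remaining triangles. $S(\vec q)=\bigcap_j K_j$, with the Euclidean metric. $S(q)$ denotes $S(\vec q)$ for the constant sequence $q_j\equiv q$ (the $q$-Sierpinski triangle). For a metric space $(X,d)$ and $x\in X$, a tangent set of $X$ at $x$ is any limit point as $t\to\infty$ of $(X,x,td)$ (metric rescaled by $t$, base point $x$) in the pointed Gromov–Hausdorff topology; the tangent cone is the family of all tangent sets. *)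

(* Defs.v *)
From Stdlib Require Import Reals Lra.
Open Scope R_scope.

Definition R2 : Type := (R * R)%type.

Definition dist2 (z w : R2) : R :=
  sqrt ((fst z - fst w) ^ 2 + (snd z - snd w) ^ 2).

Definition padd (z w : R2) : R2 := (fst z + fst w, snd z + snd w).
Definition psub (z w : R2) : R2 := (fst z - fst w, snd z - snd w).
Definition pscal (k : R) (z : R2) : R2 := (k * fst z, k * snd z).

Definition equilateral (a b c : R2) : Prop :=
  0 < dist2 a b /\ dist2 a b = dist2 b c /\ dist2 b c = dist2 c a.

(* The closed triangle with corner p, homothetic with ratio h to the
   initial triangle Delta_0 = conv{a,b,c} (same orientation, i.e. "upward"):
   { p + h (s (b-a) + t (c-a)) | s,t >= 0, s + t <= 1 }. *)
Definition in_tri (a b c : R2) (p : R2) (h : R) (z : R2) : Prop :=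
  exists s t : R, 0 <= s /\ 0 <= t /\ s + t <= 1 /\
    z = padd p (pscal h (padd (pscal s (psub b a)) (pscal t (psub c a)))).

(* kept qs j p h : the upward triangle with corner p and ratio h is one of
   the triangles composing K_j.  At step j+1 each such triangle is cut into
   q_{j+1}^2 subtriangles of ratio h/q_{j+1}; the upward ones have corners
   p + (h/q_{j+1}) (i (b-a) + k (c-a)) with i + k <= q_{j+1} - 1 and are kept;
   the downward ones are removed. *)
Inductive kept (a b c : R2) (qs : nat -> nat) : nat -> R2 -> R -> Prop :=
| kept0 : kept a b c qs 0 a 1
| keptS : forall j p h (i k : nat),
    kept a b c qs j p h ->
    (i + k < qs (S j))%nat ->
    kept a b c qs (S j)
      (padd p (pscal (h / INR (qs (S j)))
                 (padd (pscal (INR i) (psub b a)) (pscal (INR k) (psub c a)))))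
      (h / INR (qs (S j))).

Definition Kset (a b c : R2) (qs : nat -> nat) (j : nat) (z : R2) : Prop :=
  exists p h, kept a b c qs j p h /\ in_tri a b c p h z.

(* S(q_vec) = intersection of all K_j (the sequence q_j is qs j, j >= 1;
   qs 0 is unused). *)
Definition Sierpinski (a b c : R2) (qs : nat -> nat) (z : R2) : Prop :=
  forall j, Kset a b c qs j z.

Definition is_metric {Y : Type} (d : Y -> Y -> R) : Prop :=
  (forall x y, 0 <= d x y) /\
  (forall x y, d x y = 0 <-> x = y) /\
  (forall x y, d x y = d y x) /\
  (forall x y z, d x z <= d x y + d y z).

(* Pointed Gromov-Hausdorff convergence (Burago-Burago-Ivanov, Def. 8.1.1)
   of the pointed spaces (X, x, t_n * dist2) to (Y, y, dY):
   for every r > 0 and eps > 0 there is n0 such that for all n >= n0 there is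
   a map f : B_r(x) -> Y (ball for the metric t_n dist2 in X) with f x = y,
   distortion < eps, and the eps-neighbourhood of f(B_r(x)) containing
   B_{r-eps}(y). *)
Definition pGH_converges (X : R2 -> Prop) (x : R2) (t : nat -> R)
  (Y : Type) (dY : Y -> Y -> R) (y : Y) : Prop :=
  forall r eps : R, 0 < r -> 0 < eps ->
  exists n0 : nat, forall n : nat, (n0 <= n)%nat ->
  exists f : R2 -> Y,
    f x = y /\
    (forall z w, X z -> X w -> t n * dist2 x z < r -> t n * dist2 x w < r ->
       Rabs (dY (f z) (f w) - t n * dist2 z w) < eps) /\
    (forall u, dY y u < r - eps ->
       exists z, X z /\ t n * dist2 x z < r /\ dY u (f z) < eps).

Definition tangent_set (X : R2 -> Prop) (x : R2)
  (Y : Type) (dY : Y -> Y -> R) (y : Y) : Prop :=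
  X x /\ is_metric dY /\
  exists t : nat -> R,
    (forall M : R, exists N : nat, forall n, (N <= n)%nat -> M < t n) /\
    pGH_converges X x t Y dY y.

(* Main.v *)
Require Import Defs.
From Stdlib Require Import Reals Lra Lia Psatz Rgeom Classical ClassicalEpsilon.
Open Scope R_scope.

Ltac dpts := repeat match goal with
  | p : R2 |- _ => let p1 := fresh "x" in let p2 := fresh "y" in destruct p as [p1 p2]
  end.
Ltac peq := dpts; unfold padd, pscal, psub; simpl; f_equal.

Lemma dist2_sym z w : dist2 z w = dist2 w z.
Proof. unfold dist2. f_equal. ring. Qed.

Lemma dist2_nonneg z w : 0 <= dist2 z w.
Proof. apply sqrt_pos. Qed.

Lemma dist2_refl z : dist2 z z = 0.
Proof. unfold dist2. replace ((fst z - fst z) ^ 2 + (snd z - snd z) ^ 2) with 0 by ring. apply sqrt_0. Qed.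

Lemma dist2_tri x y z : dist2 x z <= dist2 x y + dist2 y z.
Proof.
  unfold dist2. pose proof (triangle (fst x) (snd x) (fst z) (snd z) (fst y) (snd y)) as H.
  unfold dist_euc, Rsqr in H. replace ((fst x - fst z) ^ 2) with ((fst x - fst z) * (fst x - fst z)) by ring.
  replace ((snd x - snd z) ^ 2) with ((snd x - snd z) * (snd x - snd z)) by ring.
  replace ((fst x - fst y) ^ 2) with ((fst x - fst y) * (fst x - fst y)) by ring.
  replace ((snd x - snd y) ^ 2) with ((snd x - snd y) * (snd x - snd y)) by ring.
  replace ((fst y - fst z) ^ 2) with ((fst y - fst z) * (fst y - fst z)) by ring.
  replace ((snd y - snd z) ^ 2) with ((snd y - snd z) * (snd y - snd z)) by ring.
  exact H.
Qed.

Definition phi (v : R2) (h : R) (w : R2) : R2 := padd v (pscal h (psub w v)).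

Lemma phi_v v h : phi v h v = v.
Proof. unfold phi. peq; ring. Qed.

Lemma dist2_phi v h w w' : 0 <= h -> dist2 (phi v h w) (phi v h w') = h * dist2 w w'.
Proof.
  intros Hh. unfold dist2, phi. unfold padd, pscal, psub; cbn [fst snd].
  match goal with |- sqrt ?e = _ => replace e with (h ^ 2 * ((fst w - fst w') ^ 2 + (snd w - snd w') ^ 2)) by ring end.
  rewrite sqrt_mult_alt by nra. rewrite sqrt_pow2 by lra. reflexivity.
Qed.

Lemma dist2_lt_sq z w k : 0 < k -> dist2 z w < k -> (fst z - fst w) ^ 2 + (snd z - snd w) ^ 2 < k ^ 2.
Proof.
  intros Hk H. unfold dist2 in H.
  set (e := (fst z - fst w) ^ 2 + (snd z - snd w) ^ 2) in *.
  assert (He : 0 <= e) by (unfold e; apply Rplus_le_le_0_compat; apply pow2_ge_0).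
  rewrite <- (pow2_sqrt e He). pose proof (sqrt_pos e). nra.
Qed.

Lemma dist2_le_of_sq z w k : 0 <= k -> (fst z - fst w) ^ 2 + (snd z - snd w) ^ 2 <= k ^ 2 -> dist2 z w <= k.
Proof.
  intros Hk H. unfold dist2. rewrite <- (sqrt_pow2 k Hk). apply sqrt_le_1_alt. exact H.
Qed.

Definition L (a b : R2) := dist2 a b.

Lemma equi_facts a b c : equilateral a b c ->
  0 < L a b /\
  (fst b - fst a) ^ 2 + (snd b - snd a) ^ 2 = L a b ^ 2 /\
  (fst c - fst a) ^ 2 + (snd c - snd a) ^ 2 = L a b ^ 2 /\
  (fst b - fst a) * (fst c - fst a) + (snd b - snd a) * (snd c - snd a) = L a b ^ 2 / 2.
Proof.
  intros [H1 [H2 H3]]. unfold L.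
  assert (E1 : dist2 a b ^ 2 = (fst a - fst b) ^ 2 + (snd a - snd b) ^ 2) by (unfold dist2; apply pow2_sqrt; apply Rplus_le_le_0_compat; apply pow2_ge_0).
  assert (E2 : dist2 b c ^ 2 = (fst b - fst c) ^ 2 + (snd b - snd c) ^ 2) by (unfold dist2; apply pow2_sqrt; apply Rplus_le_le_0_compat; apply pow2_ge_0).
  assert (E3 : dist2 c a ^ 2 = (fst c - fst a) ^ 2 + (snd c - snd a) ^ 2) by (unfold dist2; apply pow2_sqrt; apply Rplus_le_le_0_compat; apply pow2_ge_0).
  rewrite <- H2 in E2. rewrite <- H3, <- H2 in E3.
  split; [lra|]. split; [nra|]. split; [nra|]. nra.
Qed.

Lemma norm_id a b c v al be : equilateral a b c ->
  let z := padd v (padd (pscal al (psub b a)) (pscal be (psub c a))) in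
  (fst z - fst v) ^ 2 + (snd z - snd v) ^ 2 = L a b ^ 2 * (al ^ 2 + al * be + be ^ 2).
Proof.
  intros He z. destruct (equi_facts _ _ _ He) as [_ [HX [HY HXY]]]. unfold z. clear z.
  unfold padd, pscal, psub; cbn [fst snd].
  set (X1 := fst b - fst a) in *. set (X2 := snd b - snd a) in *.
  set (Y1 := fst c - fst a) in *. set (Y2 := snd c - snd a) in *.
  replace ((fst v + (al * X1 + be * Y1) - fst v) ^ 2 + (snd v + (al * X2 + be * Y2) - snd v) ^ 2)
   with (al^2 * (X1^2 + X2^2) + 2 * al * be * (X1 * Y1 + X2 * Y2) + be ^2 * (Y1^2+Y2^2)) by ring.
  idtac.
  rewrite HX, HY, HXY. field.
Qed.

Lemma corner_dist a b c p h z : equilateral a b c -> 0 <= h -> in_tri a b c p h z -> dist2 z p <= h * L a b.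
Proof.
  intros He Hh [s [t [Hs [Ht [Hst Hz]]]]].
  pose proof (equi_facts _ _ _ He) as [HL _].
  assert (Hz' : z = padd p (padd (pscal (h*s) (psub b a)) (pscal (h*t) (psub c a)))) by (rewrite Hz; peq; ring).
  assert (HLh : 0 <= h * L a b) by (apply Rmult_le_pos; lra).
  apply dist2_le_of_sq; [exact HLh|]. rewrite Hz'. rewrite (norm_id a b c) by exact He.
  assert (Hst2 : 0 <= s * t) by (apply Rmult_le_pos; lra).
  assert (Hq : (s+t)*(s+t) <= 1 * 1) by (apply Rmult_le_compat; lra).
  assert (Hq2 : s^2 + s*t + t^2 <= 1) by (replace (s^2+s*t+t^2) with ((s+t)*(s+t) - s*t) by ring; lra).
  replace (L a b ^ 2 * ((h * s) ^ 2 + h * s * (h * t) + (h * t) ^ 2)) with ((h*L a b)^2 * (s ^ 2 + s * t + t ^ 2)) by ring.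
  assert (0 <= (h*L a b)^2) by apply pow2_ge_0.
  rewrite <- (Rmult_1_r ((h*L a b)^2)) at 2. apply Rmult_le_compat_l; lra.
Qed.

Inductive keptf (a b c : R2) (qs : nat -> nat) (j0 : nat) (p0 : R2) (h0 : R) : nat -> R2 -> R -> Prop :=
| kf0 : keptf a b c qs j0 p0 h0 0 p0 h0
| kfS : forall m p h (i k : nat), keptf a b c qs j0 p0 h0 m p h -> (i + k < qs (j0 + S m)%nat)%nat ->
   keptf a b c qs j0 p0 h0 (S m)
     (padd p (pscal (h / INR (qs (j0 + S m)%nat))
        (padd (pscal (INR i) (psub b a)) (pscal (INR k) (psub c a))))) (h / INR (qs (j0 + S m)%nat)).

Lemma kept_keptf a b c qs j p h : kept a b c qs j p h -> keptf a b c qs 0 a 1 j p h.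
Proof. induction 1. constructor. apply kfS; assumption. Qed.

Lemma keptf_kept a b c qs j p h : keptf a b c qs 0 a 1 j p h -> kept a b c qs j p h.
Proof. induction 1. constructor. apply keptS; assumption. Qed.

Lemma keptf_split a b c qs j0 p0 h0 m1 m2 p h :
  keptf a b c qs j0 p0 h0 (m1 + m2) p h ->
  exists p1 h1, keptf a b c qs j0 p0 h0 m1 p1 h1 /\ keptf a b c qs (j0 + m1) p1 h1 m2 p h.
Proof.
  revert p h. induction m2 as [|m2 IH]; intros p h H.
  - rewrite Nat.add_0_r in H. exists p, h. split; [exact H | constructor].
  - rewrite Nat.add_succ_r in H. inversion H; subst.
    match goal with HH : keptf _ _ _ _ _ _ _ (m1 + m2) _ _ |- _ => destruct (IH _ _ HH) as [pp1 [hh1 [A B]]] end. exists pp1, hh1. split; [exact A|].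
    replace (j0 + S (m1 + m2))%nat with (j0 + m1 + S m2)%nat in * by lia.
    apply kfS; assumption.
Qed.

Lemma keptf_join a b c qs j0 p0 h0 m1 m2 p1 h1 p h :
  keptf a b c qs j0 p0 h0 m1 p1 h1 -> keptf a b c qs (j0 + m1) p1 h1 m2 p h ->
  keptf a b c qs j0 p0 h0 (m1 + m2) p h.
Proof.
  intros H1 H2. induction H2.
  - rewrite Nat.add_0_r. exact H1.
  - rewrite Nat.add_succ_r. replace (j0 + m1 + S m)%nat with (j0 + S (m1 + m))%nat in * by lia.
    apply kfS; assumption.
Qed.

Lemma keptf_eq a b c qs j0 p0 h0 m p h p' h' :
  keptf a b c qs j0 p0 h0 m p h -> p = p' -> h = h' -> keptf a b c qs j0 p0 h0 m p' h'.
Proof. intros H -> ->. exact H. Qed.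

Lemma kept_eq a b c qs j p h p' h' :
  kept a b c qs j p h -> p = p' -> h = h' -> kept a b c qs j p' h'.
Proof. intros H -> ->. exact H. Qed.

Lemma in_tri_child a b c p h Q (i k : nat) z :
  (i + k < Q)%nat ->
  in_tri a b c (padd p (pscal (h / INR Q) (padd (pscal (INR i) (psub b a)) (pscal (INR k) (psub c a))))) (h / INR Q) z ->
  in_tri a b c p h z.
Proof.
  intros Hik [s [t [Hs [Ht [Hst Hz]]]]].
  assert (HQ : 0 < INR Q) by (apply lt_0_INR; lia).
  assert (HQ' : INR i + INR k + 1 <= INR Q) by (rewrite <- plus_INR; rewrite <- S_INR; apply le_INR; lia).
  pose proof (pos_INR i). pose proof (pos_INR k).
  exists ((INR i + s) / INR Q), ((INR k + t) / INR Q).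
  split; [unfold Rdiv; apply Rmult_le_pos; [lra | left; apply Rinv_0_lt_compat; lra]|]. split; [unfold Rdiv; apply Rmult_le_pos; [lra | left; apply Rinv_0_lt_compat; lra]|].
  split. { unfold Rdiv. rewrite <- Rmult_plus_distr_r. apply (Rmult_le_reg_r (INR Q)); [lra|].
           rewrite Rmult_assoc, Rinv_l by lra. lra. }
  rewrite Hz. peq; field; lra.
Qed.

Lemma keptf_contain a b c qs j0 p0 h0 m p h z :
  keptf a b c qs j0 p0 h0 m p h -> in_tri a b c p h z -> in_tri a b c p0 h0 z.
Proof.
  intros H. revert z. induction H; intros z Hz. exact Hz.
  apply IHkeptf. eapply in_tri_child; eassumption.
Qed.

Fixpoint prodq (qs : nat -> nat) (j : nat) : nat :=
  match j with 0 => 1%nat | S j' => (prodq qs j' * qs (S j'))%nat end.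

Lemma prodq_pos qs j : (forall j, (1 <= j)%nat -> (1 <= qs j)%nat) -> (1 <= prodq qs j)%nat.
Proof. intros Hq. induction j; simpl. lia. specialize (Hq (S j)). nia. Qed.

Lemma kept_coords a b c qs j p h : (forall j, (1 <= j)%nat -> (1 <= qs j)%nat) ->
  kept a b c qs j p h -> exists m n : nat, (m + n + 1 <= prodq qs j)%nat /\ h = / INR (prodq qs j) /\
   p = padd a (pscal (/ INR (prodq qs j)) (padd (pscal (INR m) (psub b a)) (pscal (INR n) (psub c a)))).
Proof.
  intros Hq. induction 1.
  - exists 0%nat, 0%nat. simpl. split; [lia|]. split; [field|]. peq; field.
  - destruct IHkept as [m [n [Hmn [Hh Hp]]]].
    exists (m * qs (S j) + i)%nat, (n * qs (S j) + k)%nat. simpl.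
    pose proof (prodq_pos qs j Hq) as HM.
    assert (HM' : 0 < INR (prodq qs j)) by (apply lt_0_INR; lia).
    assert (HQ : 0 < INR (qs (S j))) by (apply lt_0_INR; lia).
    split; [nia|]. rewrite mult_INR. split. { rewrite Hh. field. lra. }
    rewrite Hp, Hh. rewrite !plus_INR, !mult_INR. peq; field; lra.
Qed.

Lemma kept_extend a b c qs j p h : (forall j, (1 <= j)%nat -> (1 <= qs j)%nat) ->
  kept a b c qs j p h -> forall d, exists h', kept a b c qs (j + d) p h'.
Proof.
  intros Hq H d. induction d as [|d [h' IH]].
  - rewrite Nat.add_0_r. eauto.
  - rewrite Nat.add_succ_r. exists (h' / INR (qs (S (j + d)))).
    eapply kept_eq. apply keptS with (i := 0%nat) (k := 0%nat). exact IH.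
    specialize (Hq (S (j + d))). lia. simpl. peq; ring. reflexivity.
Qed.

Lemma in_tri_corner a b c p h : in_tri a b c p h p.
Proof. exists 0, 0. split; [lra|]. split; [lra|]. split; [lra|]. peq; ring. Qed.

Lemma kept_vertex a b c qs j p h : (forall j, (1 <= j)%nat -> (1 <= qs j)%nat) ->
  kept a b c qs j p h -> Sierpinski a b c qs p.
Proof.
  intros Hq H J. destruct (Compare_dec.le_lt_dec j J) as [HjJ|HjJ].
  - destruct (kept_extend a b c qs j p h Hq H (J - j)) as [h' H'].
    replace (j + (J - j))%nat with J in H' by lia.
    exists p, h'. split; [exact H'|]. apply in_tri_corner.
  - apply kept_keptf in H. replace j with (J + (j - J))%nat in H by lia.
    destruct (keptf_split _ _ _ _ _ _ _ _ _ _ _ H) as [p1 [h1 [A B]]].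
    exists p1, h1. split. apply keptf_kept; exact A.
    eapply keptf_contain. exact B. apply in_tri_corner.
Qed.

Lemma image_fwd a b c qs q J v hJ m p h :
  (forall i, (i < m)%nat -> qs (J + S i)%nat = q) ->
  keptf a b c (fun _ => q) 0 a 1 m p h ->
  keptf a b c qs J (phi v hJ a) hJ m (phi v hJ p) (hJ * h).
Proof.
  intros Hq H. revert Hq. induction H; intros Hq.
  - eapply keptf_eq. constructor. reflexivity. ring.
  - assert (E : qs (J + S m)%nat = q) by (apply Hq; lia).
    eapply keptf_eq. apply kfS with (i := i) (k := k).
    apply IHkeptf. intros i0 Hi0. apply Hq. lia.
    rewrite E. exact H0.
    rewrite E. unfold phi. peq; unfold Rdiv; ring.
    rewrite E. unfold Rdiv; ring.
Qed.

Lemma image_bwd a b c qs q J v hJ m p' h' :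
  (forall i, (i < m)%nat -> qs (J + S i)%nat = q) ->
  keptf a b c qs J (phi v hJ a) hJ m p' h' ->
  exists p h, p' = phi v hJ p /\ h' = hJ * h /\ keptf a b c (fun _ => q) 0 a 1 m p h.
Proof.
  intros Hq H. revert Hq. induction H; intros Hq.
  - exists a, 1. split; [reflexivity|]. split; [ring|]. constructor.
  - assert (E : qs (J + S m)%nat = q) by (apply Hq; lia).
    destruct IHkeptf as [p1 [h1 [Ep [Eh K]]]]. intros i0 Hi0. apply Hq. lia.
    rewrite E in *. rewrite Ep, Eh.
    exists (padd p1 (pscal (h1 / INR q) (padd (pscal (INR i) (psub b a)) (pscal (INR k) (psub c a))))), (h1 / INR q).
    split. unfold phi. peq; unfold Rdiv; ring. split. unfold Rdiv; ring.
    apply (kfS a b c (fun _ => q) 0 a 1 m p1 h1 i k K). exact H0.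
Qed.

Lemma vertex_corner a b c qs v : (forall j, (1 <= j)%nat -> (1 <= qs j)%nat) ->
  (v = a \/ v = b \/ v = c) ->
  forall J, kept a b c qs J (phi v (/ INR (prodq qs J)) a) (/ INR (prodq qs J)).
Proof.
  intros Hq Hv J. induction J as [|J IH].
  - simpl. eapply kept_eq. constructor. unfold phi. destruct Hv as [->|[->| ->]]; peq; field. field.
  - pose proof (prodq_pos qs J Hq) as HM.
    assert (HM' : 0 < INR (prodq qs J)) by (apply lt_0_INR; lia).
    pose proof (Hq (S J)) as HQ0.
    assert (HQ : 0 < INR (qs (S J))) by (apply lt_0_INR; lia).
    simpl prodq. rewrite mult_INR.
    destruct Hv as [->|[->| ->]].
    + eapply kept_eq. apply keptS with (i := 0%nat) (k := 0%nat). exact IH. lia.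
      unfold phi. peq; simpl; field; lra. field; lra.
    + eapply kept_eq. apply keptS with (i := (qs (S J) - 1)%nat) (k := 0%nat). exact IH. lia.
      rewrite minus_INR by lia. unfold phi. peq; simpl; field; lra. field; lra.
    + eapply kept_eq. apply keptS with (i := 0%nat) (k := (qs (S J) - 1)%nat). exact IH. lia.
      rewrite minus_INR by lia. unfold phi. peq; simpl; field; lra. field; lra.
Qed.

Lemma vertex_in_corner a b c v h : (v = a \/ v = b \/ v = c) -> in_tri a b c (phi v h a) h v.
Proof.
  intros [->|[->| ->]].
  - exists 0, 0. split; [lra|]. split; [lra|]. split; [lra|]. unfold phi. peq; unfold Rdiv; ring.
  - exists 1, 0. split; [lra|]. split; [lra|]. split; [lra|]. unfold phi. peq; unfold Rdiv; ring.
  - exists 0, 1. split; [lra|]. split; [lra|]. split; [lra|]. unfold phi. peq; unfold Rdiv; ring.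
Qed.

Lemma gamma_bound Lr hJ al be g : 0 < Lr -> 0 < hJ ->
  Lr ^ 2 * (al ^ 2 + al * be + be ^ 2) < (Lr * hJ / 2) ^ 2 ->
  g ^ 2 <= 4 * (al ^ 2 + al * be + be ^ 2) -> -hJ < g < hJ.
Proof.
  intros HL Hh H1 H2.
  assert (H3 : al ^ 2 + al * be + be ^ 2 < (hJ / 2) ^ 2).
  { apply (Rmult_lt_reg_l (Lr ^ 2)). apply pow_lt; lra.
    replace (Lr ^ 2 * (hJ / 2) ^ 2) with ((Lr * hJ / 2) ^ 2) by field. exact H1. }
  assert (H4 : g ^ 2 < hJ ^ 2) by nra.
  split; [destruct (Rlt_le_dec (-hJ) g); [lra|nra] | destruct (Rlt_le_dec g hJ); [lra|nra]].
Qed.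

Lemma sqb1 al be : (al + be) ^ 2 <= 4 * (al ^ 2 + al * be + be ^ 2).
Proof. pose proof (pow2_ge_0 (al+be)). pose proof (pow2_ge_0 al). pose proof (pow2_ge_0 be). nra. Qed.
Lemma sqb2 al be : (- al) ^ 2 <= 4 * (al ^ 2 + al * be + be ^ 2).
Proof. pose proof (pow2_ge_0 (al+2*be)). pose proof (pow2_ge_0 al). nra. Qed.
Lemma sqb3 al be : (- be) ^ 2 <= 4 * (al ^ 2 + al * be + be ^ 2).
Proof. pose proof (pow2_ge_0 (2*al+be)). pose proof (pow2_ge_0 be). nra. Qed.

Lemma corner_unique a b c qs v J p1 h1 z : equilateral a b c ->
  (forall j, (1 <= j)%nat -> (1 <= qs j)%nat) -> (v = a \/ v = b \/ v = c) ->
  kept a b c qs J p1 h1 -> in_tri a b c p1 h1 z ->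
  dist2 z v < L a b * / INR (prodq qs J) / 2 ->
  p1 = phi v (/ INR (prodq qs J)) a /\ h1 = / INR (prodq qs J).
Proof.
  intros He Hq Hv HK [u [w [Hu [Hw [Huw Hz]]]]] Hd.
  destruct (kept_coords a b c qs J p1 h1 Hq HK) as [m [n [Hmn [Hh Hp]]]].
  pose proof (prodq_pos qs J Hq) as HM.
  set (M := prodq qs J) in *.
  assert (HM' : 0 < INR M) by (apply lt_0_INR; lia).
  set (hJ := / INR M) in *.
  assert (HhJ : 0 < hJ) by (unfold hJ; apply Rinv_0_lt_compat; lra).
  assert (HMh : INR M * hJ = 1) by (unfold hJ; field; lra).
  destruct (equi_facts _ _ _ He) as [HL _].
  split; [|exact Hh].
  subst h1.
  pose proof (pos_INR m). pose proof (pos_INR n).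
  assert (Hk : 0 < L a b * hJ / 2) by (apply Rmult_lt_0_compat; [apply Rmult_lt_0_compat|]; lra).
  apply dist2_lt_sq in Hd; [|exact Hk].
  destruct Hv as [->|[->| ->]].
  - assert (Hz' : z = padd a (padd (pscal ((INR m + u) * hJ) (psub b a)) (pscal ((INR n + w) * hJ) (psub c a))))
      by (rewrite Hz, Hp; peq; unfold Rdiv; ring).
    rewrite Hz', (norm_id a b c) in Hd by exact He.
    destruct (gamma_bound (L a b) hJ _ _ ((INR m + u) * hJ + (INR n + w) * hJ) HL HhJ Hd) as [_ G].
    { first [apply sqb1 | apply sqb2 | apply sqb3]. }
    assert (G2 : INR m + INR n + u + w < 1).
    { apply (Rmult_lt_reg_r hJ); [exact HhJ|]. lra. }
    assert (G3 : (m + n < 1)%nat) by (apply INR_lt; rewrite plus_INR; simpl; lra).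
    assert (m = 0%nat) by lia. assert (n = 0%nat) by lia. subst m n.
    rewrite Hp. unfold phi. peq; simpl; unfold Rdiv; ring.
  - assert (Hz' : z = padd b (padd (pscal ((INR m + u) * hJ - 1) (psub b a)) (pscal ((INR n + w) * hJ) (psub c a))))
      by (rewrite Hz, Hp; peq; unfold Rdiv; ring).
    rewrite Hz', (norm_id a b c) in Hd by exact He.
    destruct (gamma_bound (L a b) hJ _ _ (-((INR m + u) * hJ - 1)) HL HhJ Hd) as [_ G].
    { first [apply sqb1 | apply sqb2 | apply sqb3]. }
    assert (G2 : INR M < INR m + u + 1).
    { apply (Rmult_lt_reg_r hJ); [exact HhJ|]. lra. }
    assert (G3 : (M < m + 2)%nat) by (apply INR_lt; rewrite plus_INR; simpl; lra).
    assert (EM : M = S m) by lia. assert (n = 0%nat) by lia. subst n.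
    rewrite Hp. unfold hJ. rewrite EM, S_INR. unfold phi. peq; simpl; field; lra.
  - assert (Hz' : z = padd c (padd (pscal ((INR m + u) * hJ) (psub b a)) (pscal ((INR n + w) * hJ - 1) (psub c a))))
      by (rewrite Hz, Hp; peq; unfold Rdiv; ring).
    rewrite Hz', (norm_id a b c) in Hd by exact He.
    destruct (gamma_bound (L a b) hJ _ _ (-((INR n + w) * hJ - 1)) HL HhJ Hd) as [_ G].
    { first [apply sqb1 | apply sqb2 | apply sqb3]. }
    assert (G2 : INR M < INR n + w + 1).
    { apply (Rmult_lt_reg_r hJ); [exact HhJ|]. lra. }
    assert (G3 : (M < n + 2)%nat) by (apply INR_lt; rewrite plus_INR; simpl; lra).
    assert (EM : M = S n) by lia. assert (m = 0%nat) by lia. subst m.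
    rewrite Hp. unfold hJ. rewrite EM, S_INR. unfold phi. peq; simpl; field; lra.
Qed.

Lemma const_q_pos (q : nat) : (2 <= q)%nat -> forall j, (1 <= j)%nat -> (1 <= (fun _ : nat => q) j)%nat.
Proof. intros H j _. lia. Qed.

Lemma claim1 a b c qs q v J p z : equilateral a b c ->
  (forall j, (1 <= j)%nat -> (1 <= qs j)%nat) -> (2 <= q)%nat -> (v = a \/ v = b \/ v = c) ->
  (forall i, (i < p)%nat -> qs (J + S i)%nat = q) ->
  Sierpinski a b c qs z -> dist2 z v < L a b * / INR (prodq qs J) / 2 ->
  exists w, Sierpinski a b c (fun _ => q) w /\
    dist2 (phi v (/ INR (prodq qs J)) w) z <= L a b * / INR (prodq qs J) * / INR (prodq (fun _ => q) p).
Proof.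
  intros He Hq Hq2 Hv Hrun Hz Hd.
  destruct (Hz (J + p)%nat) as [p' [h' [HK Hin]]].
  apply kept_keptf in HK.
  destruct (keptf_split _ _ _ _ _ _ _ _ _ _ _ HK) as [p1 [h1 [A B]]].
  pose proof (keptf_contain _ _ _ _ _ _ _ _ _ _ _ B Hin) as Hin1.
  apply keptf_kept in A.
  destruct (corner_unique a b c qs v J p1 h1 z He Hq Hv A Hin1 Hd) as [E1 E2].
  rewrite E1, E2 in B. change (0 + J)%nat with J in B.
  destruct (image_bwd a b c qs q J v _ p p' h' Hrun B) as [w0 [h'' [Ep [Eh K]]]].
  apply keptf_kept in K.
  exists w0. split. eapply kept_vertex. apply (const_q_pos q Hq2). exact K.
  destruct (kept_coords a b c _ p w0 h'' (const_q_pos q Hq2) K) as [m [n [_ [Hh _]]]].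
  pose proof (prodq_pos qs J Hq) as HM. assert (HM' : 0 < INR (prodq qs J)) by (apply lt_0_INR; lia).
  pose proof (prodq_pos _ p (const_q_pos q Hq2)) as HP. assert (HP' : 0 < INR (prodq (fun _ => q) p)) by (apply lt_0_INR; lia).
  assert (Hh'0 : 0 <= h').
  { rewrite Eh, Hh. left. apply Rmult_lt_0_compat; apply Rinv_0_lt_compat; lra. }
  rewrite <- Ep, dist2_sym.
  eapply Rle_trans. apply (corner_dist a b c p' h' z He Hh'0 Hin).
  rewrite Eh, Hh. unfold L. right. ring.
Qed.

Lemma claim2 a b c qs q v J p w : equilateral a b c ->
  (forall j, (1 <= j)%nat -> (1 <= qs j)%nat) -> (2 <= q)%nat -> (v = a \/ v = b \/ v = c) ->
  (forall i, (i < p)%nat -> qs (J + S i)%nat = q) ->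
  Sierpinski a b c (fun _ => q) w ->
  exists z, Sierpinski a b c qs z /\
    dist2 z (phi v (/ INR (prodq qs J)) w) <= L a b * / INR (prodq qs J) * / INR (prodq (fun _ => q) p).
Proof.
  intros He Hq Hq2 Hv Hrun Hw.
  destruct (Hw p) as [w0 [h'' [HK Hin]]].
  destruct (kept_coords a b c _ p w0 h'' (const_q_pos q Hq2) HK) as [m [n [_ [Hh _]]]].
  apply kept_keptf in HK.
  pose proof (image_fwd a b c qs q J v (/ INR (prodq qs J)) p w0 h'' Hrun HK) as F.
  pose proof (vertex_corner a b c qs v Hq Hv J) as C. apply kept_keptf in C.
  change J with (0 + J)%nat in F at 1.
  pose proof (keptf_join _ _ _ _ _ _ _ _ _ _ _ _ _ C F) as G. apply keptf_kept in G.
  exists (phi v (/ INR (prodq qs J)) w0). split. eapply kept_vertex. exact Hq. exact G.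
  pose proof (prodq_pos qs J Hq) as HM. assert (HM' : 0 < INR (prodq qs J)) by (apply lt_0_INR; lia).
  pose proof (prodq_pos _ p (const_q_pos q Hq2)) as HP. assert (HP' : 0 < INR (prodq (fun _ => q) p)) by (apply lt_0_INR; lia).
  assert (H0 : 0 <= / INR (prodq qs J)) by (left; apply Rinv_0_lt_compat; lra).
  assert (H1 : 0 <= h'') by (rewrite Hh; left; apply Rinv_0_lt_compat; lra).
  rewrite dist2_phi by exact H0. rewrite dist2_sym.
  pose proof (corner_dist a b c w0 h'' w He H1 Hin) as D.
  rewrite Hh in D. unfold L in *.
  replace (dist2 a b * / INR (prodq qs J) * / INR (prodq (fun _ : nat => q) p))
    with (/ INR (prodq qs J) * (/ INR (prodq (fun _ : nat => q) p) * dist2 a b)) by ring.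
  apply Rmult_le_compat_l; assumption.
Qed.

Lemma prodq_const_grow q p : (2 <= q)%nat -> (p < prodq (fun _ => q) p)%nat.
Proof. intros H. induction p; simpl; nia. Qed.

Lemma K1gen T Mr Lab r d : 0 < T -> 0 < Mr -> 2 * r < T * Lab -> T * Mr * d < r -> d < Lab * / Mr / 2.
Proof.
  intros HT HM H1 H2.
  assert (H3 : T * (Mr * d) < T * (Lab / 2)) by (replace (T * (Lab/2)) with (T * Lab / 2) by field; lra).
  apply Rmult_lt_reg_l in H3; [|exact HT].
  apply (Rmult_lt_reg_l Mr); [exact HM|].
  replace (Mr * (Lab * / Mr / 2)) with (Lab / 2) by (field; lra). lra.
Qed.

Lemma scale_rel T Mr v w w' : 0 < Mr ->
  T * Mr * dist2 (phi v (/ Mr) w) (phi v (/ Mr) w') = T * dist2 w w'.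
Proof.
  intros HM. rewrite dist2_phi by (left; apply Rinv_0_lt_compat; lra). field. lra.
Qed.

Lemma scale_rel_v T Mr v w : 0 < Mr ->
  T * Mr * dist2 v (phi v (/ Mr) w) = T * dist2 v w.
Proof.
  intros HM. rewrite <- (phi_v v (/ Mr)) at 1. apply scale_rel. exact HM.
Qed.

Lemma pn_exists (T Lab : R) q n : (2 <= q)%nat ->
  exists p : nat, T * Lab * / INR (prodq (fun _ => q) p) < / INR (S n).
Proof.
  intros Hq.
  destruct (INR_archimed 1 (Rabs (T * Lab) * INR (S n))) as [p Hp]; [lra|].
  exists p.
  pose proof (prodq_const_grow q p Hq) as G. apply lt_INR in G.
  set (P := INR (prodq (fun _ => q) p)) in *.
  assert (HS : 0 < INR (S n)) by (apply lt_0_INR; lia).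
  pose proof (pos_INR p).
  assert (HP : 0 < P) by lra.
  assert (H1 : T * Lab * INR (S n) < P).
  { pose proof (Rle_abs (T * Lab)). assert (T * Lab * INR (S n) <= Rabs (T * Lab) * INR (S n)) by (apply Rmult_le_compat_r; lra). lra. }
  apply (Rmult_lt_reg_r (INR (S n) * P)). apply Rmult_lt_0_compat; lra.
  replace (T * Lab * / P * (INR (S n) * P)) with (T * Lab * INR (S n)) by (field; lra).
  replace (/ INR (S n) * (INR (S n) * P)) with P by (field; lra). exact H1.
Qed.

Theorem theorem2p7 (a b c : R2) (qs : nat -> nat) (q : nat) :
  equilateral a b c ->
  (forall j : nat, (1 <= j)%nat -> (1 <= qs j)%nat) ->
  (2 <= q)%nat ->
  (forall p : nat, exists jbar : nat, (1 <= jbar)%nat /\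
     forall j : nat, (jbar <= j <= jbar + p)%nat -> qs j = q) ->
  forall v : R2, v = a \/ v = b \/ v = c ->
  forall (Y : Type) (dY : Y -> Y -> R) (y : Y),
    tangent_set (Sierpinski a b c (fun _ => q)) v Y dY y ->
    tangent_set (Sierpinski a b c qs) v Y dY y.
Proof.
  intros He Hq Hq2 Hper v Hv Y dY y [HS2v [Hmet [t [Ht Hpgh]]]].
  pose proof (equi_facts _ _ _ He) as [HL _].
  set (Lab := L a b) in *.
  set (jb := fun p => proj1_sig (constructive_indefinite_description _ (Hper p))).
  assert (Hjb : forall p, (1 <= jb p)%nat /\ forall j, (jb p <= j <= jb p + p)%nat -> qs j = q)
    by (intro p; exact (proj2_sig (constructive_indefinite_description _ (Hper p)))).
  set (pn := fun n => proj1_sig (constructive_indefinite_description _ (pn_exists (t n) Lab q n Hq2))).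
  assert (Hpn : forall n, t n * Lab * / INR (prodq (fun _ => q) (pn n)) < / INR (S n))
    by (intro n; exact (proj2_sig (constructive_indefinite_description _ (pn_exists (t n) Lab q n Hq2)))).
  set (Jn := fun n => (jb (pn n) - 1)%nat).
  set (Mn := fun n => INR (prodq qs (Jn n))).
  assert (HMn : forall n, 1 <= Mn n).
  { intro n. unfold Mn. replace 1 with (INR 1) by reflexivity. apply le_INR. apply prodq_pos. exact Hq. }
  assert (Hrun : forall n i, (i < pn n)%nat -> qs (Jn n + S i)%nat = q).
  { intros n i Hi. destruct (Hjb (pn n)) as [H1 H2]. apply H2. unfold Jn. lia. }
  split.
  { intro J. exists (phi v (/ INR (prodq qs J)) a), (/ INR (prodq qs J)). split.
    apply vertex_corner; assumption. apply vertex_in_corner; exact Hv. }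
  split; [exact Hmet|].
  destruct Hmet as [Hm0 [Hm1 [Hm2 Hm3]]].
  exists (fun n => t n * Mn n).
  split.
  { intro M0. destruct (Ht (Rmax M0 0)) as [N HN]. exists N. intros n Hn. specialize (HN n Hn).
    pose proof (Rmax_l M0 0). pose proof (Rmax_r M0 0). specialize (HMn n).
    assert (t n * 1 <= t n * Mn n) by (apply Rmult_le_compat_l; lra). lra. }
  intros r eps Hr Heps.
  destruct (Hpgh (r + 1) (eps / 3)) as [n1 Hn1]; [lra|lra|].
  destruct (Ht (2 * r * / Lab)) as [n2 Hn2].
  destruct (archimed_cor1 (eps / 6)) as [N3 [HN3 HN3']]; [lra|].
  exists (Nat.max n1 (Nat.max n2 N3)). intros n Hn.
  destruct (Hn1 n ltac:(lia)) as [g [Hg0 [Hgd Hgs]]].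
  specialize (Hn2 n ltac:(lia)).
  assert (HT : 0 < t n).
  { assert (0 < 2 * r * / Lab) by (apply Rmult_lt_0_compat; [lra | apply Rinv_0_lt_compat; lra]). lra. }
  assert (HTL : 2 * r < t n * Lab).
  { apply (Rmult_lt_compat_r Lab) in Hn2; [|lra]. replace (2 * r * / Lab * Lab) with (2 * r) in Hn2 by (field; lra). lra. }
  assert (Hdelta : t n * Lab * / INR (prodq (fun _ => q) (pn n)) < eps / 6).
  { eapply Rlt_le_trans. apply Hpn. eapply Rle_trans; [|left; exact HN3].
    apply Rinv_le_contravar. apply lt_0_INR; lia. apply le_INR; lia. }
  assert (Hdelta1 : t n * Lab * / INR (prodq (fun _ => q) (pn n)) < 1).
  { eapply Rlt_le_trans. apply Hpn. rewrite <- Rinv_1. apply Rinv_le_contravar. lra.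
    replace 1 with (INR 1) by reflexivity. apply le_INR; lia. }
  specialize (Hrun n). specialize (HMn n).
  set (p := pn n) in *. set (J := Jn n) in *. set (T := t n) in *.
  assert (EMr : Mn n = INR (prodq qs J)) by reflexivity.
  set (Mr := Mn n) in *.
  set (hq := / INR (prodq (fun _ => q) p)) in *.
  assert (Hhq : 0 < hq) by (unfold hq; apply Rinv_0_lt_compat; apply lt_0_INR; pose proof (prodq_pos _ p (const_q_pos q Hq2)); lia).
  set (delta := T * Lab * hq) in *.
  assert (Hdel0 : 0 < delta) by (unfold delta; apply Rmult_lt_0_compat; [apply Rmult_lt_0_compat|]; lra).
  set (hJ := / Mr).
  assert (HhJ : 0 < hJ) by (unfold hJ; apply Rinv_0_lt_compat; lra).
  assert (Hscale_e : T * Mr * (Lab * hJ * hq) = delta) by (unfold delta, hJ; field; lra).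
  assert (HTM : 0 < T * Mr) by (apply Rmult_lt_0_compat; lra).
  assert (C1 : forall z, Sierpinski a b c qs z -> dist2 z v < Lab * hJ / 2 ->
     exists w, Sierpinski a b c (fun _ => q) w /\ dist2 (phi v hJ w) z <= Lab * hJ * hq).
  { intros z Hz Hd. unfold hJ, hq, Lab. rewrite EMr in *. eapply claim1; eauto. }
  assert (C2 : forall w, Sierpinski a b c (fun _ => q) w ->
     exists z, Sierpinski a b c qs z /\ dist2 z (phi v hJ w) <= Lab * hJ * hq).
  { intros w Hw. unfold hJ, hq, Lab. rewrite EMr in *. eapply claim2; eauto. }
  assert (K1 : forall z, T * Mr * dist2 v z < r -> dist2 z v < Lab * hJ / 2).
  { intros z Hz. rewrite dist2_sym. unfold hJ. apply (K1gen T Mr Lab r); [lra|lra|exact HTL|exact Hz]. }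
  assert (Hpsi : forall z, exists w, (z = v -> w = v) /\
     (Sierpinski a b c qs z -> dist2 z v < Lab * hJ / 2 ->
        Sierpinski a b c (fun _ => q) w /\ dist2 (phi v hJ w) z <= Lab * hJ * hq)).
  { intro z. destruct (classic (z = v)) as [->|Hzv].
    - exists v. split; [auto|]. intros _ _. split; [exact HS2v|]. rewrite phi_v, dist2_refl.
      left. apply Rmult_lt_0_compat; [apply Rmult_lt_0_compat|]; lra.
    - destruct (classic (Sierpinski a b c qs z /\ dist2 z v < Lab * hJ / 2)) as [[H1 H2]|Hno].
      + destruct (C1 z H1 H2) as [w Hw]. exists w. split; [intro; contradiction|auto].
      + exists v. split; [auto|]. intros H1 H2. exfalso. apply Hno. auto. }
  set (psi := fun z => proj1_sig (constructive_indefinite_description _ (Hpsi z))).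
  assert (Hpsi' : forall z, (z = v -> psi z = v) /\
     (Sierpinski a b c qs z -> dist2 z v < Lab * hJ / 2 ->
        Sierpinski a b c (fun _ => q) (psi z) /\ dist2 (phi v hJ (psi z)) z <= Lab * hJ * hq))
    by (intro z; exact (proj2_sig (constructive_indefinite_description _ (Hpsi z)))).
  assert (Tri : forall x1 x2 x3, T * Mr * dist2 x1 x3 <= T * Mr * dist2 x1 x2 + T * Mr * dist2 x2 x3).
  { intros. rewrite <- Rmult_plus_distr_l. apply Rmult_le_compat_l; [lra|]. apply dist2_tri. }
  assert (Sc : forall w w', T * Mr * dist2 (phi v hJ w) (phi v hJ w') = T * dist2 w w')
    by (intros; unfold hJ; apply scale_rel; lra).
  assert (Scv : forall w, T * Mr * dist2 v (phi v hJ w) = T * dist2 v w)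
    by (intros; unfold hJ; apply scale_rel_v; lra).
  assert (Err : forall z w, dist2 (phi v hJ w) z <= Lab * hJ * hq -> T * Mr * dist2 (phi v hJ w) z <= delta).
  { intros z w H. rewrite <- Hscale_e. apply Rmult_le_compat_l; lra. }
  assert (Err' : forall z w, dist2 (phi v hJ w) z <= Lab * hJ * hq -> T * Mr * dist2 z (phi v hJ w) <= delta).
  { intros z w H. rewrite dist2_sym. apply Err. exact H. }
  exists (fun z => g (psi z)). split.
  { simpl. rewrite (proj1 (Hpsi' v) eq_refl). exact Hg0. }
  split.
  - intros z z' Hz Hz' Hdz Hdz'.
    destruct (proj2 (Hpsi' z) Hz (K1 z Hdz)) as [Sw Dw].
    destruct (proj2 (Hpsi' z') Hz' (K1 z' Hdz')) as [Sw' Dw'].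
    set (w := psi z) in *. set (w' := psi z') in *.
    pose proof (Err _ _ Dw) as E1. pose proof (Err _ _ Dw') as E2.
    pose proof (Err' _ _ Dw) as E1'. pose proof (Err' _ _ Dw') as E2'.
    assert (Bw : T * dist2 v w < r + 1).
    { rewrite <- Scv. pose proof (Tri v z (phi v hJ w)). lra. }
    assert (Bw' : T * dist2 v w' < r + 1).
    { rewrite <- Scv. pose proof (Tri v z' (phi v hJ w')). lra. }
    pose proof (Hgd w w' Sw Sw' Bw Bw') as G.
    rewrite <- Sc in G.
    pose proof (Tri (phi v hJ w) z (phi v hJ w')) as T1.
    pose proof (Tri z z' (phi v hJ w')) as T2.
    pose proof (Tri z (phi v hJ w) z') as T3.
    pose proof (Tri (phi v hJ w) (phi v hJ w') z') as T4.
    cbv beta.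
    apply Rabs_def2 in G. destruct G as [G1 G2].
    apply Rabs_def1; lra.
  - intros u Hu.
    destruct (Hgs u ltac:(lra)) as [w [Sw [Dw Du]]].
    assert (Bv : T * dist2 v v < r + 1) by (rewrite dist2_refl; lra).
    pose proof (Hgd v w HS2v Sw Bv Dw) as G0. rewrite Hg0 in G0.
    apply Rabs_def2 in G0. destruct G0 as [G01 G02].
    pose proof (Hm3 y u (g w)). pose proof (Hm2 u (g w)).
    assert (Hvw : T * dist2 v w < r - eps / 3) by lra.
    destruct (C2 w Sw) as [z [Hz Dz]].
    assert (Ez : T * Mr * dist2 (phi v hJ w) z <= delta).
    { apply Err. rewrite dist2_sym. exact Dz. }
    assert (Hvz : T * Mr * dist2 v z < r).
    { pose proof (Tri v (phi v hJ w) z). rewrite Scv in *. lra. }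
    exists z. split; [exact Hz|]. split; [exact Hvz|].
    destruct (proj2 (Hpsi' z) Hz (K1 z Hvz)) as [Sw' Dw'].
    set (w' := psi z) in *.
    pose proof (Err' _ _ Dw') as E2.
    assert (Bw' : T * dist2 v w' < r + 1).
    { rewrite <- Scv. pose proof (Tri v z (phi v hJ w')). lra. }
    assert (Bw : T * dist2 v w < r + 1) by lra.
    pose proof (Hgd w w' Sw Sw' Bw Bw') as G. rewrite <- Sc in G.
    apply Rabs_def2 in G. destruct G as [G1 G2].
    pose proof (Tri (phi v hJ w) z (phi v hJ w')).
    pose proof (Hm3 u (g w) (g w')).
    cbv beta. lra.
Qed.
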